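(* Let $G$ be a connected threshold graph with minimum degree $\delta(G)\ge 3$. Then $px_3(G)\le 3$. Moreover, the bound is tight: for every integer $r\ge 2\cdot 2^3+1=17$, the threshold graph $rK_1\vee K_3$ satisfies $px_3(rK_1\vee K_3)=3$.
   Context: All graphs are finite, simple and undirected. A graph $G$ is a threshold graph if there are a weight function $w:V(G)\to\mathbb{R}$ and a real $t$ such that distinct $u,v$ are adjacent iff $w(u)+w(v)\ge t$. $rK_1$ is the edgeless graph on $r$ vertices and $G\vee H$ is the join (disjoint union plus all edges between $G$ and $H$). An edge-coloring assigns colors to edges, adjacent edges being allowed to share a color. A tree in an edge-colored graph is proper if no two adjacent edges of it receive the same color. An edge-coloring of $G$ is a $3$-proper coloring if for every $3$-element set $S\subseteq V(G)$ there is a proper tree in $G$ containing all vertices of $S$; $px_3(G)$ is the minimum number of colors in a $3$-proper coloring of $G$. *)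

(* Defs.v *)
From mathcomp Require Import all_boot.
From Stdlib Require Import Reals.
Set Implicit Arguments. Unset Strict Implicit. Unset Printing Implicit Defensive.

(* A finite simple graph is a symmetric irreflexive relation e on a finType T. *)

Definition threshold_graph (T : finType) (e : rel T) : Prop :=
  exists (w : T -> R) (t : R),
    forall u v : T, u != v -> (e u v <-> (t <= w u + w v)%R).

Definition connected_graph (T : finType) (e : rel T) : Prop :=
  forall x y : T, connect e x y.

Definition min_degree_ge (T : finType) (e : rel T) (d : nat) : Prop :=
  forall v : T, d <= #|[set u | e v u]|.

(* An edge-coloring with k colors assigns a color to every edge; an edge
   {x,y} is represented by the 2-element set [set x; y] (values of the
   coloring on other sets are irrelevant). *)
Definition edge_coloring (T : finType) (k : nat) := {set T} -> 'I_k.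

Definition tree_in (T : finType) (e : rel T) (U : {set T}) (F : {set {set T}}) : Prop :=
  [/\ U != set0,
      (forall E, E \in F -> exists x y, [/\ E = [set x; y], e x y, x \in U & y \in U]),
      (forall x y, x \in U -> y \in U ->
         connect (fun a b => [set a; b] \in F) x y)
    & #|F| = #|U| - 1].

Definition proper_tree (T : finType) (e : rel T) (k : nat) (c : edge_coloring T k)
    (U : {set T}) (F : {set {set T}}) : Prop :=
  tree_in e U F /\
  (forall E1 E2, E1 \in F -> E2 \in F -> E1 != E2 -> E1 :&: E2 != set0 ->
     c E1 != c E2).

Definition three_proper_coloring (T : finType) (e : rel T) (k : nat)
    (c : edge_coloring T k) : Prop :=
  forall S : {set T}, #|S| = 3 ->
    exists U F, proper_tree e c U F /\ S \subset U.

Definition px3_le (T : finType) (e : rel T) (k : nat) : Prop :=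
  exists c : edge_coloring T k, three_proper_coloring e c.

Definition px3_eq (T : finType) (e : rel T) (k : nat) : Prop :=
  px3_le e k /\ forall j, j < k -> ~ px3_le e j.

Definition rK1_join_K3_rel (r : nat) : rel ('I_r + 'I_3)%type :=
  fun a b => match a, b with
             | inl _, inl _ => false
             | inl _, inr _ => true
             | inr _, inl _ => true
             | inr i, inr j => i != j
             end.
Arguments rK1_join_K3_rel r : clear implicits.

(* Main.v *)
Require Import Defs.
From mathcomp Require Import all_boot.
From mathcomp Require Import zify.
From Stdlib Require Import Reals Lra.
Set Implicit Arguments. Unset Strict Implicit. Unset Printing Implicit Defensive.

Lemma tree_base (T : finType) (e : rel T) k (c : edge_coloring T k) a :
  proper_tree e c [set a] set0.
Proof.
split.
- split.
  + by apply/set0Pn; exists a; rewrite inE.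
  + by move=> E; rewrite inE.
  + by move=> x y; rewrite !inE => /eqP-> /eqP->; apply: connect0.
  + by rewrite cards0 cards1.
- by move=> E1 E2; rewrite inE.
Qed.

Lemma tree_edge_sub (T : finType) (e : rel T) U F E w :
  tree_in e U F -> E \in F -> w \in E -> w \in U.
Proof.
case=> _ hE _ _ /hE [x [y [-> _ hx hy]]].
by rewrite !inE => /orP[] /eqP->.
Qed.

Lemma tree_ext (T : finType) (e : rel T) k (c : edge_coloring T k) U F v u :
  proper_tree e c U F -> u \in U ->
  (v \notin U -> e v u /\ forall E, E \in F -> u \in E -> c E != c [set v; u]) ->
  exists U' F', [/\ proper_tree e c U' F', v \in U', U \subset U' &
                    F' \subset [set v; u] |: F].
Proof.
move=> pt uU H.
have [vU|vU] := boolP (v \in U).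
  by exists U, F; split=> //; apply: subsetUr.
have [evu Hc] := H vU.
have tr := pt.1.
case: pt => [[hne hE hconn hcard] hprop].
have Nn : [set v; u] \notin F.
  apply/negP => N; have := tree_edge_sub (w:=v) tr N.
  by rewrite !inE eqxx (negbTE vU) => /(_ isT).
exists (v |: U), ([set v; u] |: F); split.
- split.
  + split.
    * by apply/set0Pn; exists v; rewrite !inE eqxx.
    * move=> E; rewrite !inE => /orP[/eqP->|EF].
        by exists v, u; split; rewrite ?inE ?eqxx ?uU ?orbT.
      have [x [y [-> exy hx hy]]] := hE E EF.
      by exists x, y; split; rewrite // !inE ?hx ?hy orbT.
    * have sub : subrel (fun a b => [set a; b] \in F)
                   (connect (fun a b => [set a; b] \in [set v; u] |: F)).
        by move=> a b ab; apply: connect1; rewrite !inE ab orbT.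
      have vu : connect (fun a b => [set a; b] \in [set v; u] |: F) v u.
        by apply: connect1; rewrite !inE eqxx.
      have uv : connect (fun a b => [set a; b] \in [set v; u] |: F) u v.
        by apply: connect1; rewrite !inE setUC eqxx.
      move=> x y; rewrite !inE => /orP[/eqP->|xU] /orP[/eqP->|yU].
      - exact: connect0.
      - by apply: connect_trans vu (connect_sub sub (hconn _ _ uU yU)).
      - by apply: connect_trans (connect_sub sub (hconn _ _ xU uU)) uv.
      - exact: (connect_sub sub (hconn _ _ xU yU)).
    * rewrite !cardsU1 Nn vU hcard /=.
      have : 0 < #|U| by rewrite card_gt0.
      lia.
  + move=> E1 E2; rewrite !inE => /orP[/eqP->|E1F] /orP[/eqP->|E2F].
    * by rewrite eqxx.
    * move=> _ /set0Pn [w]; rewrite !inE => /andP[hw wE2].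
      have wU := tree_edge_sub tr E2F wE2.
      case/orP: hw => /eqP ew; first by rewrite -ew wU in vU.
      by rewrite eq_sym; apply: Hc; rewrite // -ew.
    * move=> _ /set0Pn [w]; rewrite !inE => /andP[wE1 hw].
      have wU := tree_edge_sub tr E1F wE1.
      case/orP: hw => /eqP ew; first by rewrite -ew wU in vU.
      by apply: Hc; rewrite // -ew.
    * exact: hprop.
- by rewrite !inE eqxx.
- exact: subsetUr.
- exact: subxx.
Qed.


Definition o0 : 'I_3 := @Ordinal 3 0 isT.
Definition o1 : 'I_3 := @Ordinal 3 1 isT.
Definition o2 : 'I_3 := @Ordinal 3 2 isT.

Definition k4col (T : finType) (a b c : T) : edge_coloring T 3 := fun E =>
  if (a \in E) && (b \in E) then o0
  else if (b \in E) && (c \in E) then o1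
  else if (a \in E) && (c \in E) then o2
  else if a \in E then o1
  else if b \in E then o2
  else o0.

Lemma px3_core (T : finType) (e : rel T) (a b c : T) :
  a != b -> b != c -> a != c ->
  (forall v, v != a -> e v a) -> (forall v, v != b -> e v b) ->
  (forall v, v != c -> e v c) -> px3_le e 3.
Proof.
move=> ab bc ac ea eb ec.
have ba : b != a by rewrite eq_sym.
have cb : c != b by rewrite eq_sym.
have ca : c != a by rewrite eq_sym.
exists (k4col a b c) => S hS.
have : size (enum S) = 3 by rewrite -cardE.
case Es: (enum S) => [|x [|y [|z [|? ?]]]] // _.
have t0 := tree_base e (k4col a b c) a.
have [U1 [F1 [t1 bU1 sU1 sF1]]] : exists U' F', [/\ proper_tree e (k4col a b c) U' F',
      b \in U', [set a] \subset U' & F' \subset [set b; a] |: set0].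
  apply: (tree_ext t0 (set11 a)) => _; split; first exact: ea.
  by move=> E; rewrite inE.
have aU1 : a \in U1 by apply: (subsetP sU1); rewrite inE.
have [U2 [F2 [t2 cU2 sU2 sF2]]] : exists U' F', [/\ proper_tree e (k4col a b c) U' F',
      c \in U', U1 \subset U' & F' \subset [set c; b] |: F1].
  apply: (tree_ext t1 bU1) => _; split; first exact: eb.
  move=> E /(subsetP sF1); rewrite !inE orbF => /eqP-> _.
  by rewrite /k4col !inE !eqxx ?(negbTE ab) ?(negbTE ac) ?(negbTE ba) ?(negbTE ca) /= orbT.
have aU2 : a \in U2 by apply: (subsetP sU2).
have bU2 : b \in U2 by apply: (subsetP sU2).
have [U3 [F3 [t3 xU3 sU3 sF3]]] : exists U' F', [/\ proper_tree e (k4col a b c) U' F',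
      x \in U', U2 \subset U' & F' \subset [set x; a] |: F2].
  apply: (tree_ext t2 aU2) => xU2.
  have xa : x != a by move: xU2; apply: contraNneq => ->.
  have xb : x != b by move: xU2; apply: contraNneq => ->.
  have xc : x != c by move: xU2; apply: contraNneq => ->.
  split; first exact: ea.
  move=> E /(subsetP sF2); rewrite !inE => /orP[/eqP->|/(subsetP sF1)].
    by rewrite !inE ?(negbTE ab) ?(negbTE ac).
  rewrite !inE orbF => /eqP-> _.
  by rewrite /k4col !inE !eqxx ?(negbTE ab) ?(negbTE ba) ?(eq_sym a x) ?(eq_sym b x) ?(eq_sym c x) ?(negbTE xa) ?(negbTE xb) ?(negbTE xc) ?(negbTE ca) /=.
have aU3 : a \in U3 by apply: (subsetP sU3).
have bU3 : b \in U3 by apply: (subsetP sU3).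
have cU3 : c \in U3 by apply: (subsetP sU3).
have [U4 [F4 [t4 yU4 sU4 sF4]]] : exists U' F', [/\ proper_tree e (k4col a b c) U' F',
      y \in U', U3 \subset U' & F' \subset [set y; b] |: F3].
  apply: (tree_ext t3 bU3) => yU3.
  have ya : y != a by move: yU3; apply: contraNneq => ->.
  have yb : y != b by move: yU3; apply: contraNneq => ->.
  have yc : y != c by move: yU3; apply: contraNneq => ->.
  split; first exact: eb.
  have hy : k4col a b c [set y; b] = o2.
    by rewrite /k4col !inE !eqxx ?(negbTE ab) ?(negbTE ac) ?(negbTE ba) ?(negbTE ca)
    ?(negbTE cb) ?(eq_sym a y) ?(eq_sym b y) ?(eq_sym c y) ?(negbTE ya) ?(negbTE yb) ?(negbTE yc).
  rewrite hy.
  move=> E EF bE; have Ec : (a \in E) || (c \in E).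
    move: EF => /(subsetP sF3); rewrite !inE => /orP[/eqP EE|/(subsetP sF2)].
      by rewrite EE !inE eqxx ?orbT.
    rewrite !inE => /orP[/eqP->|/(subsetP sF1)]; first by rewrite !inE eqxx ?orbT.
    by rewrite !inE orbF => /eqP->; rewrite !inE eqxx ?orbT.
  rewrite /k4col bE; case/orP: Ec => ->; first by [].
  by case: (a \in E).
have aU4 : a \in U4 by apply: (subsetP sU4).
have bU4 : b \in U4 by apply: (subsetP sU4).
have cU4 : c \in U4 by apply: (subsetP sU4).
have xU4 : x \in U4 by apply: (subsetP sU4).
have [U5 [F5 [t5 zU5 sU5 sF5]]] : exists U' F', [/\ proper_tree e (k4col a b c) U' F',
      z \in U', U4 \subset U' & F' \subset [set z; c] |: F4].
  apply: (tree_ext t4 cU4) => zU4.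
  have za : z != a by move: zU4; apply: contraNneq => ->.
  have zb : z != b by move: zU4; apply: contraNneq => ->.
  have zc : z != c by move: zU4; apply: contraNneq => ->.
  split; first exact: ec.
  have hz : k4col a b c [set z; c] = o0.
    by rewrite /k4col !inE !eqxx ?(negbTE ab) ?(negbTE ac) ?(negbTE ba) ?(negbTE ca)
    ?(negbTE cb) ?(negbTE bc) ?(eq_sym a z) ?(eq_sym b z) ?(eq_sym c z) ?(negbTE za) ?(negbTE zb) ?(negbTE zc).
  rewrite hz.
  (* every edge of F4 is a 2-set; containing c it cannot contain both a and b *)
  move=> E EF cE.
  have [[_ hE4 _ _] _] := t4; have [p [q [Epq _ _ _]]] := hE4 E EF.
  have nab : ~~ ((a \in E) && (b \in E)).
    move: cE; rewrite Epq !inE => /orP[]/eqP <-; rewrite ?(negbTE ac) ?(negbTE bc) ?orbF /=;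
      apply/negP => /andP[/eqP ha /eqP hb]; by move: ab; rewrite ha hb eqxx.
  have Eab : (a \in E) || (b \in E).
    move: EF => /(subsetP sF4); rewrite !inE => /orP[/eqP EE|/(subsetP sF3)].
      by rewrite EE !inE eqxx ?orbT.
    rewrite !inE => /orP[/eqP EE|/(subsetP sF2)]; first by rewrite EE !inE eqxx ?orbT.
    rewrite !inE => /orP[/eqP->|/(subsetP sF1)]; first by rewrite !inE eqxx ?orbT.
    by rewrite !inE orbF => /eqP->; rewrite !inE eqxx ?orbT.
  move: nab Eab; rewrite /k4col cE andbT.
  by case: (a \in E); case: (b \in E).
have yU5 : y \in U5 by apply: (subsetP sU5).
have xU5 : x \in U5 by apply: (subsetP sU5).
exists U5, F5; split=> //.
apply/subsetP => s; rewrite -mem_enum Es !inE => /orP[/eqP->//|/orP[/eqP->//|]].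
by move=> /eqP->.
Qed.


Lemma seq_max (T : eqType) (w : T -> R) (s : seq T) :
  s != [::] -> exists2 m, m \in s & forall x, x \in s -> (w x <= w m)%R.
Proof.
elim: s => // x s IH _.
case: s IH => [|y s] IH.
  by exists x; rewrite ?inE // => z; rewrite inE => /eqP->; apply: Rle_refl.
have [m ms hm] := IH isT.
case: (Rle_dec (w x) (w m)) => h.
  exists m; first by rewrite inE ms orbT.
  by move=> z; rewrite inE => /orP[/eqP->//|]; apply: hm.
exists x; first by rewrite inE eqxx.
move=> z; rewrite inE => /orP[/eqP->|/hm]; first by apply: Rle_refl.
by move=> hz; lra.
Qed.

Lemma set_max (T : finType) (w : T -> R) (A : {set T}) :
  A != set0 -> exists2 m, m \in A & forall x, x \in A -> (w x <= w m)%R.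
Proof.
move=> /set0Pn [a aA].
have : enum A != [::] by apply/eqP => h; move: aA; rewrite -mem_enum h.
case/(seq_max w) => m; rewrite mem_enum => mA hm.
by exists m => // x xA; apply: hm; rewrite mem_enum.
Qed.

Lemma threshold_px3 (T : finType) (e : rel T) :
  symmetric e -> irreflexive e ->
  threshold_graph e -> connected_graph e -> min_degree_ge e 3 -> px3_le e 3.
Proof.
move=> _ irr [w [t Hw]] _ hdeg.
have shift v u z : e v u -> z != v -> (w u <= w z)%R -> e v z.
  move=> evu zv le.
  have uv : v != u by apply: contraTneq evu => <-; rewrite irr.
  have /(Hw _ _ uv) h1 := evu.
  apply/(Hw _ _ _); first by rewrite eq_sym.
  lra.
have nbr v (X : {set T}) : #|X| <= 2 -> exists2 u, e v u & u \notin X.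
  move=> hX; case: (pickP [pred u | e v u & u \notin X]) => [u /andP[]|hn].
    by exists u.
  suff : #|[set u | e v u]| <= #|X| by have := hdeg v; lia.
  apply: subset_leq_card; apply/subsetP => u; rewrite inE => evu.
  by move: (hn u); rewrite /= evu /= => /negbT; rewrite negbK.
case: (pickP (fun _ : T => true)) => [v0 _|none]; last first.
  exists (fun _ => o0) => S hS; exfalso.
  have : 0 < #|S| by rewrite hS.
  by rewrite card_gt0 => /set0Pn [s _]; have := none s.
have [a _ ha] := @set_max T w [set: T] (ltac:(by apply/set0Pn; exists v0)).
have [b bA hb] := @set_max T w ([set: T] :\ a)
  (ltac:(have [u _ hu] := nbr v0 [set a] (ltac:(by rewrite cards1));
         by apply/set0Pn; exists u; move: hu; rewrite !inE andbT)).
have [c cA hc] := @set_max T w ([set: T] :\ b :\ a)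
  (ltac:(have [u _ hu] := nbr v0 [set a; b] (ltac:(by rewrite cards2; case: (a != b)));
         by apply/set0Pn; exists u; move: hu; rewrite !inE negb_or andbT => /andP[-> ->])).
move: bA cA; rewrite !inE andbT => ba /andP[ca /andP[cb _]].
apply: (@px3_core T e a b c).
- by rewrite eq_sym.
- by rewrite eq_sym.
- by rewrite eq_sym.
- move=> v va; have [u evu _] := nbr v set0 (ltac:(by rewrite cards0)).
  by apply: (shift v u) => //; [rewrite eq_sym | apply: ha].
- move=> v vb; have [u evu hu] := nbr v [set a] (ltac:(by rewrite cards1)).
  apply: (shift v u) => //; first by rewrite eq_sym.
  by apply: hb; move: hu; rewrite !inE andbT.
- move=> v vc; have [u evu hu] := nbr v [set a; b] (ltac:(by rewrite cards2; case: (a != b))).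
  apply: (shift v u) => //; first by rewrite eq_sym.
  by apply: hc; move: hu; rewrite !inE negb_or andbT => /andP[-> ->].
Qed.


Lemma sum_mem_card (X : finType) (A B : {set X}) :
  \sum_(v in A) (v \in B) = #|A :&: B|.
Proof.
rewrite -sum1_card (big_setID B) /= setIC.
rewrite [X in _ + X]big1 ?addn0; last by move=> i; rewrite !inE => /andP[/negbTE->].
rewrite big_mkcond [RHS]big_mkcond; apply: eq_bigr => i _.
by rewrite !inE; case: (i \in B); case: (i \in A).
Qed.

Lemma pigeon (I Y : finType) (f : I -> Y) :
  2 * #|Y| < #|I| -> exists y, 2 < #|[set i | f i == y]|.
Proof.
move=> h; case: (pickP [pred y | 2 < #|[set i | f i == y]|]) => [y hy|none].
  by exists y.
suff : #|I| <= 2 * #|Y| by lia.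
have -> : #|I| = \sum_(y : Y) #|[set i | f i == y]|.
  rewrite -sum1_card (partition_big f predT) //=.
  apply: eq_bigr => y _; rewrite -sum1_card; apply: eq_bigl => i.
  by rewrite !inE.
rewrite mulnC -sum_nat_const; apply: leq_sum => y _.
by move: (none y) => /= /negbT; rewrite -leqNgt.
Qed.

Lemma deg_le (T : finType) (e : rel T) k (c : edge_coloring T k) U F v :
  proper_tree e c U F -> #|[set E in F | v \in E]| <= k.
Proof.
case=> _ hp.
rewrite -[k]card_ord; apply: (@leq_card_in _ _ c) => E1 E2.
rewrite !inE => /andP[E1F vE1] /andP[E2F vE2] hc.
apply/eqP; apply: contraT => ne.
have := hp _ _ E1F E2F ne; rewrite hc eqxx; apply.
by apply/set0Pn; exists v; rewrite inE vE1.
Qed.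

Lemma handshake (T : finType) (e : rel T) U F :
  irreflexive e -> tree_in e U F ->
  \sum_(v in U) #|[set E in F | v \in E]| = 2 * #|F|.
Proof.
move=> irr tr; have [_ hE _ _] := tr.
transitivity (\sum_(v in U) \sum_(E in F) (v \in E)).
  apply: eq_bigr => v _.
  rewrite (eq_bigr (fun E : {set T} => (E \in [set E0 : {set T} | v \in E0]) : nat)); last by move=> E _; rewrite inE.
  rewrite sum_mem_card; apply: eq_card => E.
  by rewrite !inE.
rewrite exchange_big /= mulnC -sum_nat_const; apply: eq_bigr => E EF.
rewrite sum_mem_card.
have [x [y [Exy exy xU yU]]] := hE E EF.
have -> : U :&: E = E.
  by apply/setIidPr/subsetP => z zE; apply: (tree_edge_sub tr EF zE).
rewrite Exy cards2; case: eqP => // xy.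
by rewrite xy irr in exy.
Qed.


Lemma pair_eq (T : finType) (p q x y : T) :
  x \in [set p; q] -> y \in [set p; q] -> x != y -> [set p; q] = [set x; y].
Proof.
rewrite !inE => /orP[]/eqP-> /orP[]/eqP->; rewrite ?eqxx // => _.
exact: setUC.
Qed.

Lemma arith_key (a1 a2 nF nU nUS : nat) : a1 + a2 = 2 * nF -> nF = nU - 1 ->
  a1 <= 3 -> a2 <= nUS * 2 -> nUS = nU - 3 -> 3 <= nU -> False.
Proof. lia. Qed.

Lemma no_px3 r k (c : edge_coloring ('I_r + 'I_3)%type k) :
  17 <= r -> k <= 2 -> ~ three_proper_coloring (rK1_join_K3_rel r) c.
Proof.
move=> hr hk hc.
set e := rK1_join_K3_rel r.
have irr : irreflexive e by case=> //= i; rewrite eqxx.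
pose vec (i : 'I_r) := [ffun j : 'I_3 => c [set inl i; inr j]].
have [y hy] : exists y, 2 < #|[set i | vec i == y]|.
  apply: pigeon; rewrite card_ffun !card_ord.
  have : expn k 3 <= 8 by move: hk; clear; case: k => [|[|[|]]].
  lia.
case/card_gt2P: hy => i1 [i2 [i3 [[h1 h2 h3] [d12 d23 d31]]]].
pose S := [set inl i1; inl i2; inl i3] : {set ('I_r + 'I_3)%type}.
have hS : #|S| = 3.
  rewrite /S setUC cardsU1 cards2 !inE /=.
  by rewrite !(inj_eq inl_inj) (negbTE d31) (eq_sym i3 i2) (negbTE d23) d12.
have Sinl s : s \in S -> exists2 i, s = inl i & vec i = y.
  move: h1 h2 h3; rewrite !inE => /eqP h1 /eqP h2 /eqP h3.
  by move=> /orP[/orP[]|]/eqP->; [exists i1 | exists i2 | exists i3].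
have [U [F [[tr hp] sSU]]] := hc S hS.
have [_ hE _ hcard] := tr.
pose G (j : 'I_3) := [set E in F | (inr j \in E) && (S :&: E != set0)].
have Gform j E : E \in G j -> exists2 i, E = [set inl i; inr j] & vec i = y.
  rewrite !inE => /and3P[EF jE /set0Pn [s]]; rewrite in_setI => /andP[sS sE].
  have [i si vi] := Sinl s sS.
  exists i => //.
  have [p [q [Epq _ _ _]]] := hE E EF.
  by rewrite Epq -si; apply: pair_eq; rewrite -?Epq // si.
have G1 j : #|G j| <= 1.
  apply/card_le1_eqP => E1 E2 E1G E2G.
  have E1F : E1 \in F by move: E1G; rewrite inE => /andP[].
  have E2F : E2 \in F by move: E2G; rewrite inE => /andP[].
  have [i1' E1e v1] := Gform j E1 E1G.
  have [i2' E2e v2] := Gform j E2 E2G.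
  apply/eqP; apply: contraT => ne.
  have := hp _ _ E1F E2F (ltac:(by rewrite eq_sym)).
  have -> : c E1 = c E2.
    have w1 : vec i1' j = y j by rewrite v1.
    have w2 : vec i2' j = y j by rewrite v2.
    by move: w1 w2; rewrite /vec !ffunE E1e E2e => -> ->.
  rewrite eqxx; apply.
  by apply/set0Pn; exists (inr j); rewrite E1e E2e !inE eqxx !orbT.
have perE E : E \in F -> #|S :&: E| <= \sum_(j : 'I_3) (E \in G j).
  move=> EF.
  have [/eqP->|ne] := boolP (S :&: E == set0); first by rewrite cards0.
  have [p [q [Epq epq _ _]]] := hE E EF.
  have [j jE] : exists j, inr j \in E.
    rewrite Epq; move: epq; clear Epq; case: p => [ip|jp]; case: q => [iq|jq] //= _.
    - by exists jq; rewrite !inE eqxx orbT.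
    - by exists jp; rewrite !inE eqxx.
    - by exists jp; rewrite !inE eqxx.
  have EG : E \in G j by rewrite !inE EF jE ne.
  rewrite (bigD1 j) //= EG.
  suff hle : #|S :&: E| <= 1 by apply: leq_trans hle _; apply: leq_addr.
  have pq : p != q by apply: contraTneq epq => ->; apply/negbT; exact: (irr q).
  have cE : #|E| = 2 by rewrite Epq cards2 pq.
  have := cardsD1 (inr j) E; rewrite jE cE /= add1n => -[h'].
  apply: (@leq_trans #|E :\ inr j|); last by rewrite -h'.
  apply: subset_leq_card; apply/subsetP => x; rewrite in_setI in_setD1 => /andP[xS ->].
  by have [i -> _] := Sinl x xS; rewrite andbT.
have Sdeg : \sum_(v in S) #|[set E in F | v \in E]| <= 3.
  have -> : \sum_(v in S) #|[set E in F | v \in E]| = \sum_(E in F) #|S :&: E|.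
    transitivity (\sum_(v in S) \sum_(E in F) (v \in E)).
      apply: eq_bigr => v _.
      rewrite (eq_bigr (fun E : {set _} => (E \in [set E0 : {set _} | v \in E0]) : nat));
        last by move=> E _; rewrite inE.
      rewrite sum_mem_card; apply: eq_card => E.
      by rewrite !inE.
    by rewrite exchange_big /=; apply: eq_bigr => E _; rewrite sum_mem_card.
  apply: (@leq_trans (\sum_(E in F) \sum_(j : 'I_3) (E \in G j))).
    by apply: leq_sum => E EF; apply: perE.
  rewrite exchange_big /=.
  apply: (@leq_trans (\sum_(j : 'I_3) 1)); last by rewrite sum1_card card_ord.
  apply: leq_sum => j _; rewrite sum_mem_card.
  by apply: leq_trans (G1 j); apply: subset_leq_card; apply: subsetIr.
have hsum := handshake irr tr.
rewrite (big_setID S) /= in hsum.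
have USS : U :&: S = S by apply/setIidPr.
rewrite USS in hsum.
have rest : \sum_(v in U :\: S) #|[set E in F | v \in E]| <= #|U :\: S| * 2.
  rewrite -sum_nat_const; apply: leq_sum => v _.
  by apply: leq_trans (deg_le v (conj tr hp)) hk.
have cUS : #|U :\: S| = #|U| - 3 by rewrite cardsD USS hS.
have U3 : 3 <= #|U| by apply: leq_trans (subset_leq_card sSU); rewrite hS.
exact: arith_key hsum hcard Sdeg rest cUS U3.
Qed.

Theorem corollary3p5 :
  (forall (T : finType) (e : rel T),
      symmetric e -> irreflexive e ->
      threshold_graph e -> connected_graph e -> min_degree_ge e 3 ->
      px3_le e 3)
  /\
  (forall r : nat, 17 <= r -> px3_eq (rK1_join_K3_rel r) 3).
Proof.
split.
  by move=> T e; exact: threshold_px3.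
move=> r hr; split.
  apply: (@px3_core _ _ (inr o0) (inr o1) (inr o2)) => //;
    move=> [i|j] //= h; apply/eqP => hj; move: h; rewrite hj eqxx.
move=> j hj [c hc].
have hj2 : j <= 2 by rewrite -ltnS.
exact: (no_px3 hr hj2 hc).
Qed.
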